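(* For every $r\ge0$, $\lim_{\Lambda\to\infty}U_\Lambda(r)=U(r)$. Moreover, with $\kappa_0=15\pi/2$, for every $\Lambda\ge1$ and every integer $m\ge0$, $$\Big\|\frac{U_\Lambda-U}{(1+U)^{m+1}}\Big\|_{L^\infty(\mathbb{R}_+)}\le\kappa_0^{m+3}\max\Big\{\frac1{(1+B_\Lambda)^m},\frac1{E(2\Lambda)}\Big\}.$$ Finally, with $\kappa_1=258/\pi$, for every $\Lambda\ge1$ and all $0\le r\le2\Lambda$, $0\le U_\Lambda(r)\le\kappa_1(1+U(r))$.
   Context: $E(r)=(1+r^2)^{1/2}$. $B_\Lambda=\frac1\pi\int_0^{\Lambda/E(\Lambda)}\frac{z^2-z^4/3}{1-z^2}dz$. For $0\le r\le2\Lambda$, with $Z_\Lambda(r)=(E(\Lambda)-E(\Lambda-r))/r$ (and $Z_\Lambda(0)=\Lambda/E(\Lambda)$), $B_\Lambda(r)=\frac1\pi\int_0^{Z_\Lambda(r)}\frac{z^2-z^4/3}{(1-z^2)(1+r^2(1-z^2)/4)}dz+\frac{r}{2\pi}\int_0^{Z_\Lambda(r)}\frac{z-z^3/3}{E(\Lambda)-rz/2}dz$. $U_\Lambda(r)=B_\Lambda-B_\Lambda(r)$ for $0\le r\le2\Lambda$ and $U_\Lambda(r)=0$ for $r>2\Lambda$. $U(r)=\frac{r^2}{4\pi}\int_0^1\frac{z^2-z^4/3}{1+r^2(1-z^2)/4}dz$. *)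

(* Defs.v *)
From Stdlib Require Import Reals Lra ClassicalEpsilon.
Open Scope R_scope.

(* When f is
   Riemann integrable on [a,b] this is exactly the Riemann integral. *)
Definition Rint (f : R -> R) (a b : R) : R :=
  epsilon (inhabits 0)
    (fun v => exists pr : Riemann_integrable f a b, RiemannInt pr = v).

Definition E (r : R) : R := sqrt (1 + r ^ 2).

Definition BL (L : R) : R :=
  / PI * Rint (fun z => (z ^ 2 - z ^ 4 / 3) / (1 - z ^ 2)) 0 (L / E L).

Definition ZL (L r : R) : R :=
  if Req_EM_T r 0 then L / E L else (E L - E (L - r)) / r.

Definition BLr (L r : R) : R :=
  / PI * Rint (fun z => (z ^ 2 - z ^ 4 / 3)
                         / ((1 - z ^ 2) * (1 + r ^ 2 * (1 - z ^ 2) / 4)))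
               0 (ZL L r)
  + r / (2 * PI) * Rint (fun z => (z - z ^ 3 / 3) / (E L - r * z / 2))
               0 (ZL L r).

Definition UL (L r : R) : R :=
  if Rle_dec r (2 * L) then BL L - BLr L r else 0.

Definition U (r : R) : R :=
  r ^ 2 / (4 * PI) * Rint (fun z => (z ^ 2 - z ^ 4 / 3) / (1 + r ^ 2 * (1 - z ^ 2) / 4)) 0 1.

Definition kappa0 : R := 15 * PI / 2.
Definition kappa1 : R := 258 / PI.

(* Main.v *)
Require Import Defs.
From Stdlib Require Import Reals Lra Lia Psatz ClassicalEpsilon FunctionalExtensionality.
Open Scope R_scope.

Definition contOn (f : R -> R) (a b : R) := forall x, a <= x <= b -> continuity_pt f x.

Lemma Rint_eq f a b (pr : Riemann_integrable f a b) : Rint f a b = RiemannInt pr.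
Proof.
  unfold Rint.
  destruct (epsilon_spec (inhabits 0)
             (fun v => exists pr : Riemann_integrable f a b, RiemannInt pr = v))
    as [pr' H].
  { exists (RiemannInt pr). exists pr. reflexivity. }
  rewrite <- H. apply RiemannInt_P5.
Qed.

Lemma cont_int f a b : a <= b -> contOn f a b -> Riemann_integrable f a b.
Proof. intros; apply continuity_implies_RiemannInt; auto. Qed.

Lemma Rint_le f g a b : a <= b -> contOn f a b -> contOn g a b ->
  (forall x, a <= x <= b -> f x <= g x) -> Rint f a b <= Rint g a b.
Proof.
  intros hab hf hg hle.
  rewrite (Rint_eq _ _ _ (cont_int f a b hab hf)), (Rint_eq _ _ _ (cont_int g a b hab hg)).
  apply RiemannInt_P19; auto. intros x hx; apply hle; lra.
Qed.

Lemma Rint_const_le f a b M : a <= b -> contOn f a b ->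
  (forall x, a <= x <= b -> f x <= M) -> Rint f a b <= M * (b - a).
Proof.
  intros hab hf hle.
  rewrite (Rint_eq _ _ _ (cont_int f a b hab hf)).
  rewrite <- (RiemannInt_P15 (RiemannInt_P14 a b M)).
  apply RiemannInt_P19; auto. intros x hx; unfold fct_cte; apply hle; lra.
Qed.

Lemma Rint_const_ge f a b M : a <= b -> contOn f a b ->
  (forall x, a <= x <= b -> M <= f x) -> M * (b - a) <= Rint f a b.
Proof.
  intros hab hf hle.
  rewrite (Rint_eq _ _ _ (cont_int f a b hab hf)).
  rewrite <- (RiemannInt_P15 (RiemannInt_P14 a b M)).
  apply RiemannInt_P19; auto. intros x hx; unfold fct_cte; apply hle; lra.
Qed.

Lemma Rint_nonneg f a b : a <= b -> contOn f a b ->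
  (forall x, a <= x <= b -> 0 <= f x) -> 0 <= Rint f a b.
Proof.
  intros. pose proof (Rint_const_ge f a b 0 H H0 H1). lra.
Qed.

Lemma contOn_sub f a b c d : a <= c -> d <= b -> contOn f a b -> contOn f c d.
Proof. intros h1 h2 h x hx; apply h; lra. Qed.

Lemma Rint_chasles f a b c : a <= b -> b <= c -> contOn f a c ->
  Rint f a b + Rint f b c = Rint f a c.
Proof.
  intros hab hbc hf.
  assert (h1 := cont_int f a b hab (contOn_sub f a c a b (Rle_refl _) hbc hf)).
  assert (h2 := cont_int f b c hbc (contOn_sub f a c b c hab (Rle_refl _) hf)).
  assert (h3 := cont_int f a c (Rle_trans _ _ _ hab hbc) hf).
  rewrite (Rint_eq _ _ _ h1), (Rint_eq _ _ _ h2), (Rint_eq _ _ _ h3).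
  apply RiemannInt_P26.
Qed.

Lemma Rint_lin f g a b l : a <= b -> contOn f a b -> contOn g a b ->
  Rint (fun x => f x + l * g x) a b = Rint f a b + l * Rint g a b.
Proof.
  intros hab hf hg.
  assert (hfg : contOn (fun x => f x + l * g x) a b).
  { intros x hx. apply continuity_pt_plus; [apply hf; auto|].
    apply continuity_pt_mult; [apply continuity_pt_const; intros ? ?; auto| apply hg; auto]. }
  rewrite (Rint_eq _ _ _ (cont_int f a b hab hf)), (Rint_eq _ _ _ (cont_int g a b hab hg)),
    (Rint_eq _ _ _ (cont_int _ a b hab hfg)).
  apply RiemannInt_P13.
Qed.

Lemma Rint_ext f g a b : a <= b -> contOn f a b -> contOn g a b ->
  (forall x, a <= x <= b -> f x = g x) -> Rint f a b = Rint g a b.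
Proof.
  intros hab hf hg h. apply Rle_antisym; apply Rint_le; auto; intros x hx; rewrite h; auto; lra.
Qed.

Lemma cont_const c x : continuity_pt (fun _ => c) x.
Proof. apply continuity_pt_const; intros ? ?; auto. Qed.

Lemma Rint_zero a b : a <= b -> Rint (fun _ => 0) a b = 0.
Proof.
  intros hab. apply Rle_antisym.
  - pose proof (Rint_const_le (fun _ => 0) a b 0 hab (fun x _ => cont_const 0 x) (fun x _ => Rle_refl 0)); lra.
  - apply Rint_nonneg; auto. intros x _; apply cont_const. intros; lra.
Qed.

Lemma Rint_scal f a b l : a <= b -> contOn f a b ->
  Rint (fun x => l * f x) a b = l * Rint f a b.
Proof.
  intros hab hf.
  assert (h0 : contOn (fun _ => 0) a b) by (intros x _; apply cont_const).
  assert (hl : contOn (fun x => l * f x) a b).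
  { intros x hx; apply continuity_pt_mult; [apply cont_const| apply hf; auto]. }
  rewrite (Rint_ext (fun x => l * f x) (fun x => (fun _ => 0) x + l * f x)); auto.
  2:{ intros x hx; apply continuity_pt_plus; [apply cont_const| apply hl; auto]. }
  2:{ intros; ring. }
  rewrite Rint_lin by auto. rewrite Rint_zero by auto. ring.
Qed.

Lemma Rint_sub f g a b : a <= b -> contOn f a b -> contOn g a b ->
  Rint (fun x => f x - g x) a b = Rint f a b - Rint g a b.
Proof.
  intros hab hf hg.
  rewrite (Rint_ext (fun x => f x - g x) (fun x => f x + (-1) * g x)); auto.
  - rewrite Rint_lin by auto. ring.
  - intros x hx; apply continuity_pt_minus; [apply hf|apply hg]; auto.
  - intros x hx; apply continuity_pt_plus; [apply hf; auto|apply continuity_pt_mult; [apply cont_const|apply hg; auto]].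
  - intros; ring.
Qed.

Lemma FTC f F a b : a <= b -> contOn f a b ->
  (forall x, a <= x <= b -> derivable_pt_lim F x (f x)) -> Rint f a b = F b - F a.
Proof.
  intros hab hf hF.
  rewrite (Rint_eq _ _ _ (cont_int f a b hab hf)).
  rewrite (RiemannInt_P20 hab (FTC_P1 hab hf)).
  assert (A1 := @RiemannInt_P29 f a b hab hf).
  assert (A2 : antiderivative f F a b).
  { split; auto. intros x hx. exists (exist _ (f x) (hF x hx)).
    symmetry. apply derive_pt_eq_0. apply hF; auto. }
  destruct (antiderivative_Ucte _ _ _ _ _ A1 A2) as [c hc].
  rewrite (hc b), (hc a) by lra. ring.
Qed.

Definition F1 := fun z : R => (z ^ 2 - z ^ 4 / 3) / (1 - z ^ 2).
Definition F2 (r : R) := fun z : R => (z ^ 2 - z ^ 4 / 3)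
                         / ((1 - z ^ 2) * (1 + r ^ 2 * (1 - z ^ 2) / 4)).
Definition F3 (L r : R) := fun z : R => (z - z ^ 3 / 3) / (E L - r * z / 2).
Definition F4 (r : R) := fun z : R => (z ^ 2 - z ^ 4 / 3) / (1 + r ^ 2 * (1 - z ^ 2) / 4).

Lemma BL_eq L : BL L = / PI * Rint F1 0 (L / E L).
Proof. reflexivity. Qed.
Lemma BLr_eq L r : BLr L r = / PI * Rint (F2 r) 0 (ZL L r) + r / (2 * PI) * Rint (F3 L r) 0 (ZL L r).
Proof. reflexivity. Qed.
Lemma U_eq r : U r = r ^ 2 / (4 * PI) * Rint (F4 r) 0 1.
Proof. reflexivity. Qed.

Lemma cont_F1 x y : 0 <= x -> y < 1 -> contOn F1 x y.
Proof.
  intros hx hy z hz. unfold F1. reg. intro h. nra.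
Qed.

Lemma cont_F4 r x y : 0 <= x -> y <= 1 -> contOn (F4 r) x y.
Proof.
  intros hx hy z hz. unfold F4. reg. intro h.
  assert (0 <= r^2 * (1 - z^2)) by (apply Rmult_le_pos; [apply pow2_ge_0| nra]). lra.
Qed.

Lemma cont_F2 r x y : 0 <= x -> y < 1 -> contOn (F2 r) x y.
Proof.
  intros hx hy z hz. unfold F2. reg. intro h.
  assert (0 <= r^2 * (1 - z^2)) by (apply Rmult_le_pos; [apply pow2_ge_0| nra]).
  assert (0 < 1 - z^2) by nra. nra.
Qed.

Lemma cont_F3 L r x y : (forall z, x <= z <= y -> 0 < E L - r * z / 2) -> contOn (F3 L r) x y.
Proof.
  intros h z hz. unfold F3. reg. specialize (h z hz). lra.
Qed.

Lemma pi_pos : 0 < PI.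
Proof. exact PI_RGT_0. Qed.

Lemma decomp L r : 0 <= r -> r <= 2 * L -> 0 <= ZL L r -> ZL L r <= L / E L -> L / E L < 1 ->
  (forall z, 0 <= z <= ZL L r -> 0 < E L - r * z / 2) ->
  PI * UL L r = Rint F1 (ZL L r) (L / E L) + r ^ 2 / 4 * Rint (F4 r) 0 (ZL L r)
                 - r / 2 * Rint (F3 L r) 0 (ZL L r)
  /\ PI * U r = r ^ 2 / 4 * (Rint (F4 r) 0 (ZL L r) + Rint (F4 r) (ZL L r) 1).
Proof.
  intros hr hr2 hZ0 hZa ha1 hpos.
  set (Z := ZL L r) in *. set (a := L / E L) in *.
  assert (hpi := pi_pos).
  assert (c1 : Rint F1 0 a = Rint F1 0 Z + Rint F1 Z a).
  { symmetry; apply Rint_chasles; auto. apply cont_F1; lra. }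
  assert (c2 : Rint (F2 r) 0 Z = Rint F1 0 Z + (- (r^2/4)) * Rint (F4 r) 0 Z).
  { rewrite <- Rint_lin; try lra.
    - apply Rint_ext; try lra.
      + apply cont_F2; lra.
      + intros z hz. apply continuity_pt_plus. apply cont_F1 with 0 Z; lra.
        apply continuity_pt_mult. apply cont_const. apply cont_F4 with 0 Z; lra.
      + intros z hz. unfold F1, F2, F4.
        assert (0 < 1 - z^2) by nra.
        assert (0 <= r^2 * (1 - z^2)) by (apply Rmult_le_pos; [apply pow2_ge_0| nra]).
        field. split; lra.
    - apply cont_F1; lra.
    - apply cont_F4; lra. }
  assert (c3 : Rint (F4 r) 0 1 = Rint (F4 r) 0 Z + Rint (F4 r) Z 1).
  { symmetry; apply Rint_chasles; try lra. apply cont_F4; lra. }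
  split.
  - unfold UL. destruct (Rle_dec r (2 * L)); [|lra].
    rewrite BL_eq, BLr_eq. fold Z a. rewrite c1, c2. field. lra.
  - rewrite U_eq, c3. field. lra.
Qed.

Lemma E_sq x : E x ^ 2 = 1 + x ^ 2.
Proof. unfold E. rewrite pow2_sqrt; auto. nra. Qed.
Lemma E_pos x : 0 < E x.
Proof. unfold E. apply sqrt_lt_R0. nra. Qed.
Lemma E_gt x : x < E x /\ - x < E x.
Proof. pose proof (E_sq x). pose proof (E_pos x). split; nra. Qed.
Lemma E_ge1 x : 1 <= E x.
Proof. pose proof (E_sq x). pose proof (E_pos x). nra. Qed.

Lemma pq_of x : exists p, 0 < p /\ E x = (p^2+1)/(2*p) /\ x = (p^2-1)/(2*p) /\ p = E x + x.
Proof.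
  exists (E x + x). pose proof (E_sq x). pose proof (E_gt x).
  assert (0 < E x + x) by lra.
  split; [lra|]. split; [|split; [|reflexivity]].
  - apply (Rmult_eq_reg_r (2 * (E x + x))); [|lra].
    field_simplify; [|lra]. nra.
  - apply (Rmult_eq_reg_r (2 * (E x + x))); [|lra].
    field_simplify; [|lra]. nra.
Qed.

Lemma pq_exists L r : 1 <= L -> 0 < r -> r <= 2 * L ->
  exists p q, 2 <= p /\ 0 < q /\ q < p /\ 1 <= p * q /\
    E L = (p^2+1)/(2*p) /\ L = (p^2-1)/(2*p) /\
    E (L - r) = (q^2+1)/(2*q) /\ L - r = (q^2-1)/(2*q).
Proof.
  intros hL hr hr2.
  destruct (pq_of L) as [p [hp [hE [hLp hpd]]]].
  destruct (pq_of (L - r)) as [q [hq [hEs [hs hqd]]]].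
  exists p, q.
  assert (2 <= p) by (pose proof (E_ge1 L); lra).
  assert (hq2 : q < p).
  { destruct (Rlt_or_le q p) as [h|h]; auto. exfalso.
    assert (h1 : (q^2-1)/(2*q) >= (p^2-1)/(2*p)).
    { assert (e : (q^2-1)/(2*q) - (p^2-1)/(2*p) = (q - p) * (p*q + 1) / (2*p*q)) by (field; lra).
      assert (0 <= (q - p) * (p*q + 1) / (2*p*q)).
      { apply Rmult_le_pos; [apply Rmult_le_pos; nra|]. left; apply Rinv_0_lt_compat; nra. }
      lra. }
    lra. }
  assert (hpq : 1 <= p * q).
  { destruct (Rlt_or_le (p*q) 1) as [h|h]; auto. exfalso.
    assert (h1 : (q^2-1)/(2*q) < - ((p^2-1)/(2*p))).
    { assert (e : - ((p^2-1)/(2*p)) - (q^2-1)/(2*q) = (1 - p*q) * (p + q) / (2*p*q)) by (field; lra).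
      assert (0 < (1 - p*q) * (p + q) / (2*p*q)) by (apply Rdiv_lt_0_compat; nra).
      lra. }
    lra. }
  repeat split; auto; lra.
Qed.

Lemma ZL_pos L r : 0 < r -> ZL L r = (E L - E (L - r)) / r.
Proof. intros h. unfold ZL. destruct (Req_EM_T r 0); [lra|reflexivity]. Qed.
Lemma ZL_0 L : ZL L 0 = L / E L.
Proof. unfold ZL. destruct (Req_EM_T 0 0); [reflexivity|lra]. Qed.

Lemma dpoly A B C D x : derivable_pt_lim (fun z => A*z^2 + B*z^3 + C*z^4 + D*z^5) x
   (2*A*x + 3*B*x^2 + 4*C*x^3 + 5*D*x^4).
Proof.
  pose proof (derivable_pt_lim_plus _ _ _ _ _
     (derivable_pt_lim_plus _ _ _ _ _
        (derivable_pt_lim_plus _ _ _ _ _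
           (derivable_pt_lim_scal _ A x _ (derivable_pt_lim_pow x 2))
           (derivable_pt_lim_scal _ B x _ (derivable_pt_lim_pow x 3)))
        (derivable_pt_lim_scal _ C x _ (derivable_pt_lim_pow x 4)))
     (derivable_pt_lim_scal _ D x _ (derivable_pt_lim_pow x 5))) as H.
  unfold plus_fct, mult_real_fct in H. simpl pred in H.
  replace (2*A*x + 3*B*x^2 + 4*C*x^3 + 5*D*x^4) with
    (A * (INR 2 * x ^ 1) + B * (INR 3 * x ^ 2) + C * (INR 4 * x ^ 3) + D * (INR 5 * x ^ 4)).
  - exact H.
  - simpl INR. ring.
Qed.

Lemma dlog_lin (u v x : R) : 0 < u + v * x ->
  derivable_pt_lim (fun z => ln (u + v * z)) x (v / (u + v * x)).
Proof.
  intros h.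
  assert (h1 : derivable_pt_lim (fun z => u + v * z) x v).
  { pose proof (derivable_pt_lim_plus _ _ _ _ _ (derivable_pt_lim_const u x)
         (derivable_pt_lim_scal _ v x _ (derivable_pt_lim_id x))) as H.
    unfold plus_fct, mult_real_fct, fct_cte, id in H. assert (e : 0 + v * 1 = v) by ring. rewrite e in H. exact H. }
  pose proof (derivable_pt_lim_comp _ _ _ _ _ h1 (derivable_pt_lim_ln _ h)) as H.
  unfold comp in H. replace (v / (u + v * x)) with (/ (u + v * x) * v) by (field; lra). exact H.
Qed.

Lemma dscal (f : R -> R) k x l : derivable_pt_lim f x l -> derivable_pt_lim (fun z => k * f z) x (k * l).
Proof. intros H. exact (derivable_pt_lim_scal f k x l H). Qed.

Lemma int_poly k gam Z : 0 <= Z ->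
  Rint (fun z => (z - z^3/3) * (k - gam * z)) 0 Z
  = k * (Z^2/2 - Z^4/12) - gam * (Z^3/3 - Z^5/15).
Proof.
  intros hZ.
  rewrite (FTC _ (fun z => (k/2)*z^2 + (-gam/3)*z^3 + (-k/12)*z^4 + (gam/15)*z^5) 0 Z hZ).
  - simpl. field.
  - intros x hx. reg.
  - intros x hx.
    replace ((x - x^3/3) * (k - gam * x)) with
      (2*(k/2)*x + 3*(-gam/3)*x^2 + 4*(-k/12)*x^3 + 5*(gam/15)*x^4) by (simpl; field).
    apply dpoly.
Qed.

Lemma int_inv1m a : 0 <= a -> a < 1 ->
  Rint (fun z => 2/3 / (1 - z)) 0 a = 2/3 * (- ln (1 - a)).
Proof.
  intros h0 h1.
  rewrite (FTC _ (fun z => (-(2/3)) * ln (1 + (-1) * z)) 0 a h0).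
  - replace (1 + -1 * 0) with 1 by ring. rewrite ln_1.
    replace (1 + -1 * a) with (1 - a) by ring. ring.
  - intros x hx. reg. lra.
  - intros x hx.
    replace (2/3 / (1 - x)) with (-(2/3) * (-1 / (1 + -1 * x))) by (field; lra).
    apply dscal. apply dlog_lin. lra.
Qed.

Lemma int_Ulow c : 0 <= c ->
  Rint (fun z => c / 6 / (1 + 2 * c * (1 - z))) (1/2) 1 = ln (1 + c) / 12.
Proof.
  intros hc.
  rewrite (FTC _ (fun z => (-(1/12)) * ln ((1 + 2*c) + (-2*c) * z)) (1/2) 1); try lra.
  - replace (1 + 2 * c + -2 * c * 1) with 1 by ring. rewrite ln_1.
    replace (1 + 2 * c + -2 * c * (1/2)) with (1 + c) by field. field.
  - intros x hx. reg. nra.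
  - intros x hx.
    replace (c / 6 / (1 + 2 * c * (1 - x))) with (-(1/12) * ((-2*c) / ((1 + 2*c) + (-2*c) * x))) by (field; nra).
    apply dscal. apply dlog_lin. nra.
Qed.

Ltac pos := repeat (apply Rplus_le_le_0_compat || apply Rmult_le_pos); try apply pow_le; try lra.
Lemma polya1 (Z d y : R) : 0 <= Z -> 0 <= d -> 0 <= y -> Z + d + y = 1 ->
  0 <= (Z^2 - Z^4/3) * ((1 - (Z+d)^2)*(1-Z^2)^2 + d^2) * (1 - (Z+d)*Z)
     - (Z^2/2 - Z^4/12) * ((1 - (Z+d)^2)*(1-Z^2)^2 + d^2) * (1 - Z^2)
     + d * (Z^3/3 - Z^5/15) * (1 - Z^2) * (1 - (Z+d)*Z).
Proof.
  intros hZ hd hy hs.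
  assert (hy' : y = 1 - Z - d) by lra.
  match goal with |- 0 <= ?e => replace e with ((1/2)*Z^2*y^10 + 5*Z^2*d^1*y^9 + (45/2)*Z^2*d^2*y^8 + 60*Z^2*d^3*y^7 + 105*Z^2*d^4*y^6 + 126*Z^2*d^5*y^5 + 105*Z^2*d^6*y^4 + 60*Z^2*d^7*y^3 + (45/2)*Z^2*d^8*y^2 + 5*Z^2*d^9*y^1 + (1/2)*Z^2*d^10 + 5*Z^3*y^9 + (130/3)*Z^3*d^1*y^8 + (500/3)*Z^3*d^2*y^7 + (1120/3)*Z^3*d^3*y^6 + (1610/3)*Z^3*d^4*y^5 + (1540/3)*Z^3*d^5*y^4 + (980/3)*Z^3*d^6*y^3 + (400/3)*Z^3*d^7*y^2 + (95/3)*Z^3*d^8*y^1 + (10/3)*Z^3*d^9 + (81/4)*Z^4*y^8 + (446/3)*Z^4*d^1*y^7 + (1429/3)*Z^4*d^2*y^6 + 870*Z^4*d^3*y^5 + (5945/6)*Z^4*d^4*y^4 + (2162/3)*Z^4*d^5*y^3 + 327*Z^4*d^6*y^2 + (254/3)*Z^4*d^7*y^1 + (115/12)*Z^4*d^8 + 42*Z^5*y^7 + (7603/30)*Z^5*d^1*y^6 + (3273/5)*Z^5*d^2*y^5 + (1879/2)*Z^5*d^3*y^4 + (2432/3)*Z^5*d^4*y^3 + (843/2)*Z^5*d^5*y^2 + (613/5)*Z^5*d^6*y^1 + (463/30)*Z^5*d^7 + 46*Z^6*y^6 + (3289/15)*Z^6*d^1*y^5 + (6601/15)*Z^6*d^2*y^4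 + (2398/5)*Z^6*d^3*y^3 + (4516/15)*Z^6*d^4*y^2 + (1549/15)*Z^6*d^5*y^1 + 15*Z^6*d^6 + 24*Z^7*y^5 + (434/5)*Z^7*d^1*y^4 + (2032/15)*Z^7*d^2*y^3 + (1729/15)*Z^7*d^3*y^2 + (154/3)*Z^7*d^4*y^1 + (131/15)*Z^7*d^5 + 4*Z^8*y^4 + (188/15)*Z^8*d^1*y^3 + (1231/60)*Z^8*d^2*y^2 + (443/30)*Z^8*d^3*y^1 + (167/60)*Z^8*d^4 + (16/15)*Z^9*d^1*y^2 + (21/10)*Z^9*d^2*y^1 + (11/30)*Z^9*d^3) end.
  - pos.
  - subst y. field.
Qed.

Lemma key_ineq p q : 2 <= p -> 0 < q -> q < p -> 1 <= p * q ->
  let a := (p^2-1)/(p^2+1) in let Z := (p*q-1)/(p*q+1) in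
  let r := (p-q)*(p*q+1)/(2*p*q) in let k := (p-q)/(p+q) in let c := r^2/4 in
  0 <= F1 Z * (a - Z) - k * (Z^2/2 - Z^4/12) + c/(1+c) * (Z^3/3 - Z^5/15).
Proof.
  intros hp hq hqp hpq a Z r k c.
  assert (hZ0 : 0 <= Z) by (unfold Z; apply Rmult_le_pos; [lra|left; apply Rinv_0_lt_compat; lra]).
  assert (hZ1 : Z < 1) by (unfold Z; apply (Rmult_lt_reg_r (p*q+1)); [lra|]; field_simplify; lra).
  assert (hda : a - Z = 2*p*(p-q)/((p^2+1)*(p*q+1))) by (unfold a, Z; field; nra).
  assert (hd0 : 0 <= a - Z) by (rewrite hda; apply Rmult_le_pos; [nra|left; apply Rinv_0_lt_compat; nra]).
  assert (ha1 : a < 1) by (unfold a; apply (Rmult_lt_reg_r (p^2+1)); [nra|]; field_simplify; nra).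
  assert (ha0 : 0 <= a) by lra.
  set (d := a - Z) in *.
  assert (hdd : d = a - Z) by reflexivity.
  clearbody d.
  assert (hpol := polya1 Z d (1 - a) hZ0 hd0 ltac:(lra) ltac:(rewrite hdd; ring)).
  replace (Z + d) with a in hpol by (rewrite hdd; ring).
  set (al := (1 - a^2)*(1-Z^2)^2 + d^2) in *.
  assert (hald : al = (1 - a^2)*(1-Z^2)^2 + d^2) by reflexivity. clearbody al.
  assert (hal : 0 < al).
  { rewrite hald. assert (0 < 1 - a^2) by nra. assert (0 < 1 - Z^2) by nra.
    assert (0 < (1-a^2)*(1-Z^2)^2) by (apply Rmult_lt_0_compat; nra). nra. }
  assert (haz : 0 < 1 - a * Z) by nra.
  assert (hk : k = d / (1 - a * Z)).
  { rewrite hda. unfold k, a, Z. field. repeat split; nra. }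
  assert (hc : c / (1 + c) = d^2 / al).
  { rewrite hald, hda. unfold c, r, a, Z. field. repeat split; try nra.
    - replace ((p ^ 2 + 1) ^ 2 - (p ^ 2 - 1) ^ 2) with (4 * p^2) by ring.
      replace ((p * q + 1) ^ 2 - (p * q - 1) ^ 2) with (4 * (p * q)) by ring.
      apply Rgt_not_eq. assert (0 < 4 * p^2 * (4 * (p*q))^2) by (apply Rmult_lt_0_compat; nra).
      assert (0 <= (2 * p * (p - q) * (p * q + 1)) ^ 2) by apply pow2_ge_0. lra.
    - apply Rgt_not_eq. assert (0 < 4 * p ^ 2 * q ^ 2 * 4) by (assert (0 < p*q) by nra; nra).
      assert (0 <= ((p - q) * (p * q + 1)) ^ 2) by apply pow2_ge_0. lra. }
  rewrite hk, hc. unfold F1.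
  assert (e : (Z ^ 2 - Z ^ 4 / 3) / (1 - Z ^ 2) * d - d / (1 - a * Z) * (Z ^ 2 / 2 - Z ^ 4 / 12) +
     d ^ 2 / al * (Z ^ 3 / 3 - Z ^ 5 / 15) =
     d / (al * (1 - a*Z) * (1 - Z^2)) *
     ((Z^2 - Z^4/3) * al * (1 - a*Z) - (Z^2/2 - Z^4/12) * al * (1 - Z^2)
      + d * (Z^3/3 - Z^5/15) * (1 - Z^2) * (1 - a*Z))).
  { field. repeat split; nra. }
  rewrite e. apply Rmult_le_pos; [|exact hpol].
  apply Rmult_le_pos; [lra|]. left; apply Rinv_0_lt_compat.
  apply Rmult_lt_0_compat; [apply Rmult_lt_0_compat|]; nra.
Qed.

Lemma geom L r p q : 0 < r -> 2 <= p -> 0 < q -> q < p -> 1 <= p * q ->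
  E L = (p^2+1)/(2*p) -> L = (p^2-1)/(2*p) ->
  E (L - r) = (q^2+1)/(2*q) -> L - r = (q^2-1)/(2*q) ->
  L / E L = (p^2-1)/(p^2+1) /\ ZL L r = (p*q-1)/(p*q+1) /\
  r = (p-q)*(p*q+1)/(2*p*q) /\ E L + E (L - r) = (p+q)*(p*q+1)/(2*p*q) /\
  r * ZL L r = E L - E (L - r).
Proof.
  intros hr hp hq hqp hpq hE hL hEs hs.
  assert (hr' : r = (p-q)*(p*q+1)/(2*p*q)).
  { replace r with (L - (L - r)) by ring. rewrite hs. rewrite hL at 1. field. lra. }
  assert (hZr : r * ZL L r = E L - E (L - r)).
  { rewrite ZL_pos by auto. field. lra. }
  repeat split; auto.
  - rewrite hE. rewrite hL at 1. field. nra.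
  - rewrite ZL_pos by auto. rewrite hEs, hE, hr'. field. repeat split; nra.
  - rewrite hE, hEs. field. lra.
Qed.

Lemma Rint_pt f a : Rint f a a = 0.
Proof.
  rewrite (Rint_eq _ _ _ (RiemannInt_P7 f a)). apply RiemannInt_P9.
Qed.

Lemma div_le_div A B C D : 0 < B -> 0 < D -> A * D <= C * B -> A / B <= C / D.
Proof.
  intros hB hD h.
  assert (e : A / B - C / D = (A * D - C * B) / (B * D)) by (field; lra).
  assert ((A * D - C * B) / (B * D) <= 0).
  { unfold Rdiv. assert (0 < / (B * D)) by (apply Rinv_0_lt_compat; nra). nra. }
  lra.
Qed.

Lemma F1_mono z w : 0 <= z -> z <= w -> w < 1 -> F1 z <= F1 w.
Proof.
  intros h0 h1 h2. unfold F1.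
  assert (0 < 1 - z^2) by nra. assert (0 < 1 - w^2) by nra.
  apply div_le_div; auto.
  assert (hu : z^2 <= w^2) by nra.
  assert (0 <= w^2 - z^2) by lra.
  assert (0 <= 1 - (z^2 + w^2)/3 + z^2*w^2/3) by nra.
  nra.
Qed.

Lemma g_le z : 0 <= z <= 1 -> 0 <= z - z^3/3 <= 2/3.
Proof.
  intros [h0 h1].
  assert (e1 : z - z^3/3 = z * (1 - z^2/3)) by field.
  assert (e2 : 2/3 - (z - z^3/3) = (1-z)^2*(2+z)/3) by field.
  assert (0 <= z^2 <= 1) by nra.
  split.
  - rewrite e1. apply Rmult_le_pos; lra.
  - assert (0 <= (1-z)^2*(2+z)/3) by (apply Rmult_le_pos; [apply Rmult_le_pos; [apply pow2_ge_0|lra]|lra]). lra.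
Qed.

Lemma f_le z : 0 <= z <= 1 -> 0 <= z^2 - z^4/3 <= 2/3.
Proof.
  intros h. assert (0 <= z^2 <= 1) by nra.
  replace (z^2 - z^4/3) with ((z^2) - (z^2)^2/3) by field.
  set (u := z^2) in *. split; nra.
Qed.

Lemma div_lt_1 x y : 0 < y -> x < y -> x / y < 1.
Proof. intros h1 h2. apply (Rmult_lt_reg_r y); [lra|]. replace (x / y * y) with x by (field; lra). lra. Qed.
Lemma div_nonneg x y : 0 <= x -> 0 < y -> 0 <= x / y.
Proof. intros h1 h2. apply Rmult_le_pos; [lra|left; apply Rinv_0_lt_compat; lra]. Qed.
Lemma div_pos x y : 0 < x -> 0 < y -> 0 < x / y.
Proof. intros h1 h2. apply Rdiv_lt_0_compat; lra. Qed.

Lemma pt_bound E0 S r z Z : 0 <= r -> 0 <= z -> z <= Z -> Z <= 1 -> 0 < E0 + S -> r * Z = E0 - S ->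
  r/2 * ((z - z^3/3)/(E0 - r*z/2)) - r^2/4 * ((z^2 - z^4/3)/(1 + r^2*(1-z^2)/4))
  <= (z - z^3/3) * (r/(E0+S) - (r^2/4)/(1 + r^2/4) * z).
Proof.
  intros hr hz hzZ hZ1 hES hrZ.
  assert (hg := g_le z ltac:(lra)).
  set (g := z - z^3/3) in *.
  assert (hf : z^2 - z^4/3 = z * g) by (unfold g; field).
  rewrite hf.
  set (c := r^2/4).
  assert (hc : 0 <= c) by (unfold c; nra).
  assert (r*z <= r*Z) by (apply Rmult_le_compat_l; lra).
  assert (hden1 : (E0 + S)/2 <= E0 - r*z/2) by lra.
  assert (h1 : r/2 * (g / (E0 - r*z/2)) <= g * (r / (E0 + S))).
  { replace (r/2 * (g / (E0 - r*z/2))) with (g * ((r/2) / (E0 - r*z/2))) by (field; lra).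
    apply Rmult_le_compat_l; [lra|].
    replace (r / (E0 + S)) with ((r/2) / ((E0 + S)/2)) by (field; lra).
    apply div_le_div; try lra. apply Rmult_le_compat_l; lra. }
  assert (z^2 <= 1) by nra. assert (0 <= c * (1 - z^2)) by (apply Rmult_le_pos; lra).
  assert (hM : 0 < 1 + c * (1 - z^2)) by lra.
  assert (h2 : g * (c / (1 + c) * z) <= c * (z * g / (1 + c * (1 - z^2)))).
  { replace (g * (c / (1 + c) * z)) with ((c * z * g) / (1 + c)) by (field; lra).
    replace (c * (z * g / (1 + c * (1 - z^2)))) with ((c * z * g) / (1 + c * (1 - z^2))) by (field; lra).
    apply div_le_div; try lra.
    assert (0 <= c * z * g) by (apply Rmult_le_pos; [apply Rmult_le_pos|]; lra).
    assert (0 <= c * z^2) by (apply Rmult_le_pos; nra).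
    apply Rmult_le_compat_l; lra. }
  replace (r^2/4) with c by reflexivity.
  assert (e : g * (r / (E0 + S) - c / (1 + c) * z) = g * (r / (E0 + S)) - g * (c / (1 + c) * z)) by ring.
  rewrite e. replace (1 + r ^ 2 * (1 - z ^ 2) / 4) with (1 + c * (1 - z^2)) by (unfold c; field). lra.
Qed.

Lemma UL_nonneg L r : 1 <= L -> 0 <= r -> r <= 2 * L -> 0 <= UL L r.
Proof.
  intros hL hr hr2.
  assert (hpi := pi_pos).
  destruct (Req_dec r 0) as [h0|hrp].
  - subst r. pose proof (E_sq L). pose proof (E_pos L). pose proof (E_gt L).
    assert (ha0 : 0 <= L / E L) by (apply div_nonneg; lra).
    assert (ha1 : L / E L < 1) by (apply div_lt_1; lra).
    destruct (decomp L 0) as [h1 _]; try rewrite ZL_0; try lra.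
    + intros z hz. lra.
    + rewrite ZL_0, Rint_pt in h1.
      assert (PI * UL L 0 = 0) by (rewrite h1; field).
      assert (UL L 0 = 0) by (apply (Rmult_eq_reg_l PI); [lra|lra]). lra.
  - assert (hr0 : 0 < r) by lra.
    destruct (pq_exists L r hL hr0 hr2) as (p & q & hp & hq & hqp & hpq & hE & hLp & hEs & hs).
    destruct (geom L r p q hr0 hp hq hqp hpq hE hLp hEs hs) as (ha & hZ & hrpq & hEE & hrZ).
    pose proof (key_ineq p q hp hq hqp hpq) as K. cbv zeta in K.
    rewrite <- ha, <- hZ, <- hrpq in K.
    set (a := L / E L) in *. set (Z := ZL L r) in *.
    assert (hZ0 : 0 <= Z) by (rewrite hZ; apply div_nonneg; lra).
    assert (hZa : Z <= a).
    { rewrite ha, hZ. apply div_le_div; nra. }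
    assert (ha1 : a < 1) by (rewrite ha; apply div_lt_1; nra).
    assert (hES : 0 < E L + E (L - r)) by (pose proof (E_pos L); pose proof (E_pos (L-r)); lra).
    assert (hk : (p - q)/(p + q) = r / (E L + E (L - r))).
    { rewrite hEE, hrpq. field. repeat split; nra. }
    rewrite hk in K.
    assert (hposd : forall z, 0 <= z <= Z -> 0 < E L - r * z / 2) by (intros; nra).
    destruct (decomp L r hr hr2 hZ0 hZa ha1 hposd) as [hD _]. fold a Z in hD.
    assert (hR1 : F1 Z * (a - Z) <= Rint F1 Z a).
    { apply Rint_const_ge; auto. apply cont_F1; lra.
      intros x hx. apply F1_mono; lra. }
    assert (hcont3 : contOn (F3 L r) 0 Z) by (apply cont_F3; intros; apply hposd; lra).
    assert (hcont4 : contOn (F4 r) 0 Z) by (apply cont_F4; lra).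
    assert (hI : r/2 * Rint (F3 L r) 0 Z - r^2/4 * Rint (F4 r) 0 Z <=
                 r / (E L + E (L - r)) * (Z^2/2 - Z^4/12) - (r^2/4)/(1 + r^2/4) * (Z^3/3 - Z^5/15)).
    { rewrite <- int_poly by lra.
      rewrite <- (Rint_scal (F3 L r) 0 Z (r/2) ltac:(lra) hcont3), <- (Rint_scal (F4 r) 0 Z (r^2/4) ltac:(lra) hcont4).
      rewrite <- Rint_sub; try lra.
      - apply Rint_le; try lra.
        + intros x hx. apply continuity_pt_minus; apply continuity_pt_mult;
            try apply cont_const; [apply hcont3|apply hcont4]; lra.
        + intros x hx. reg.
        + intros x hx. unfold F3, F4.
          apply (pt_bound (E L) (E (L - r)) r x Z); lra.
      - intros x hx. apply continuity_pt_mult; [apply cont_const|apply hcont3; lra].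
      - intros x hx. apply continuity_pt_mult; [apply cont_const|apply hcont4; lra]. }
    assert (hU : 0 <= PI * UL L r) by lra.
    destruct (Rle_or_lt 0 (UL L r)) as [h|h]; auto.
    assert (PI * UL L r < 0) by (apply Rmult_pos_neg; lra). lra.
Qed.

Lemma F4_bounds r z : 0 <= z <= 1 -> 0 <= F4 r z <= 2/3.
Proof.
  intros hz. unfold F4. pose proof (f_le z hz).
  assert (0 <= r^2 * (1 - z^2)) by (apply Rmult_le_pos; [apply pow2_ge_0|nra]).
  split.
  - apply div_nonneg; lra.
  - replace (2/3) with ((2/3)/1) by field. apply div_le_div; lra.
Qed.

Lemma main_bounds L r : 1 <= L -> 0 < r -> r <= 2 * L ->
  exists R1 R3 R4a R4b,
    PI * UL L r = R1 + r^2/4 * R4a - r/2 * R3 /\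
    PI * U r = r^2/4 * (R4a + R4b) /\
    0 <= R1 /\ 0 <= R3 /\ 0 <= R4a /\ 0 <= R4b /\
    r/2 * R3 <= 2 * r / (3 * E L) /\
    (8 * r^2 < E L ^ 2 -> R1 <= r / E L /\ r^2/4 * R4b <= r / E L) /\
    (E L ^ 2 <= 8 * r^2 -> R1 <= 33 * (r^2/4 * R4b)).
Proof.
  intros hL hr0 hr2.
  assert (hr : 0 <= r) by lra.
  destruct (pq_exists L r hL hr0 hr2) as (p & q & hp & hq & hqp & hpq & hE & hLp & hEs & hs).
  destruct (geom L r p q hr0 hp hq hqp hpq hE hLp hEs hs) as (ha & hZ & hrpq & hEE & hrZ).
  assert (hpE : E L + L = p) by (rewrite hE, hLp at 1; field; lra).
  assert (hqE : E (L - r) + (L - r) = q) by (rewrite hEs, hs at 1; field; lra).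
  pose proof (E_pos L) as hEp. pose proof (E_pos (L - r)) as hEsp.
  pose proof (E_sq L) as hEsq. pose proof (E_gt L) as hEgt. pose proof (E_gt (L - r)) as hEsgt.
  set (a := L / E L) in *. set (Z := ZL L r) in *.
  assert (hZ0 : 0 <= Z) by (rewrite hZ; apply div_nonneg; lra).
  assert (hZa : Z <= a) by (rewrite ha, hZ; apply div_le_div; nra).
  assert (ha1 : a < 1) by (rewrite ha; apply div_lt_1; nra).
  assert (hposd : forall z, 0 <= z <= Z -> 0 < E L - r * z / 2) by (intros; nra).
  destruct (decomp L r hr hr2 hZ0 hZa ha1 hposd) as [hD hUd]. fold a Z in hD, hUd.
  exists (Rint F1 Z a), (Rint (F3 L r) 0 Z), (Rint (F4 r) 0 Z), (Rint (F4 r) Z 1).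
  assert (hcont3 : contOn (F3 L r) 0 Z) by (apply cont_F3; intros; apply hposd; lra).
  assert (hR1 : 0 <= Rint F1 Z a).
  { apply Rint_nonneg; auto. apply cont_F1; lra. intros x hx. unfold F1.
    pose proof (f_le x ltac:(lra)). apply div_nonneg; nra. }
  assert (hR3 : 0 <= Rint (F3 L r) 0 Z).
  { apply Rint_nonneg; auto. intros x hx. unfold F3.
    pose proof (g_le x ltac:(lra)). apply div_nonneg; try lra. apply hposd; lra. }
  assert (hR4a : 0 <= Rint (F4 r) 0 Z).
  { apply Rint_nonneg; auto. apply cont_F4; lra. intros x hx. apply F4_bounds; lra. }
  assert (hR4b : 0 <= Rint (F4 r) Z 1).
  { apply Rint_nonneg; try lra. apply cont_F4; lra. intros x hx. apply F4_bounds; lra. }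
  assert (hR3b : Rint (F3 L r) 0 Z <= (4/3) / E L * (Z - 0)).
  { apply Rint_const_le; auto. intros x hx. unfold F3.
    pose proof (g_le x ltac:(lra)).
    assert (r * x <= r * Z) by (apply Rmult_le_compat_l; lra).
    assert (E L - r * x / 2 >= E L / 2) by lra.
    apply div_le_div; try lra. nra. }
  assert (hZ1 : Z <= 1) by lra.
  repeat split; auto.
  - assert (r/2 * Rint (F3 L r) 0 Z <= r/2 * ((4/3) / E L * (Z - 0))) by (apply Rmult_le_compat_l; lra).
    assert (r/2 * ((4/3) / E L * (Z - 0)) <= 2 * r / (3 * E L)).
    { replace (r/2 * ((4/3) / E L * (Z - 0))) with (2 * r * Z / (3 * E L)) by (field; lra).
      assert (r * Z <= r * 1) by (apply Rmult_le_compat_l; lra).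
      apply div_le_div; try lra. nra. }
    lra.
  -
    match goal with H : 8 * r^2 < _ |- _ => rename H into hsm end.
    assert (hrL : r < L / 2) by nra.
    assert (hqL : L < q) by lra.
    assert (hEL : E L < L + 1) by nra.
    assert (hp3 : p <= 3 * q) by lra.
    apply Rle_trans with (F1 a * (a - Z)).
    { apply Rint_const_le; try lra. apply cont_F1; lra. intros x hx. apply F1_mono; lra. }
    assert (ha0 : 0 <= a) by lra.
    assert (h1a : 0 < 1 - a^2) by nra.
    assert (hF1a : F1 a <= (2/3)/(1 - a^2)).
    { unfold F1. pose proof (f_le a ltac:(lra)). apply div_le_div; try lra. nra. }
    apply Rle_trans with ((2/3)/(1 - a^2) * (a - Z)).
    { apply Rmult_le_compat_r; lra. }
    rewrite ha, hZ, hrpq, hE.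
    replace (2 / 3 / (1 - ((p ^ 2 - 1) / (p ^ 2 + 1)) ^ 2) * ((p ^ 2 - 1) / (p ^ 2 + 1) - (p * q - 1) / (p * q + 1)))
      with ((p^2+1)*(p-q)/(3*p*(p*q+1))) by (field; repeat split; nra).
    replace ((p - q) * (p * q + 1) / (2 * p * q) / ((p ^ 2 + 1) / (2 * p)))
      with ((p-q)*(p*q+1)/(q*(p^2+1))) by (field; repeat split; nra).
    apply div_le_div; try nra.
    assert (h1 : q * (p^2+1) <= p * (p*q+1)) by nra.
    assert (h2 : p^2 + 1 <= 3 * (p*q+1)) by nra.
    assert (h3 : 0 <= p - q) by lra.
    assert (h4 : q * (p^2+1) * (p^2+1) <= 3 * (p*q+1) * (p * (p*q+1))).
    { apply Rle_trans with (3 * (p*q+1) * (q * (p^2+1))).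
      - assert (0 <= q * (p^2+1)) by (apply Rmult_le_pos; [lra|pose proof (pow2_ge_0 p); lra]).
        replace (3 * (p*q+1) * (q * (p^2+1))) with ((q * (p^2+1)) * (3 * (p*q+1))) by ring.
        apply Rmult_le_compat_l; lra.
      - apply Rmult_le_compat_l; nra. }
    replace ((p ^ 2 + 1) * (p - q) * (q * (p ^ 2 + 1))) with ((p - q) * (q * (p^2+1) * (p^2+1))) by ring.
    replace ((p - q) * (p * q + 1) * (3 * p * (p * q + 1))) with ((p - q) * (3 * (p*q+1) * (p * (p*q+1)))) by ring.
    apply Rmult_le_compat_l; lra.
  -
    match goal with H : 8 * r^2 < _ |- _ => rename H into hsm end.
    assert (hrL : r < L / 2) by nra.
    assert (hqL : L < q) by lra.
    assert (hEL : E L < L + 1) by nra.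
    assert (hR4bb : Rint (F4 r) Z 1 <= 2/3 * (1 - Z)).
    { apply Rint_const_le; try lra. apply cont_F4; lra. intros x hx. apply F4_bounds; lra. }
    assert (h1Z : 1 - Z = 2 / (p*q+1)) by (rewrite hZ; field; nra).
    apply Rle_trans with (r^2/4 * (2/3 * (1 - Z))).
    { apply Rmult_le_compat_l; nra. }
    rewrite h1Z.
    replace (r ^ 2 / 4 * (2 / 3 * (2 / (p * q + 1)))) with (r^2 / (3 * (p*q+1))) by (field; nra).
    apply div_le_div; try nra.
    assert (r * E L <= (L/2) * (L+1)) by (apply Rmult_le_compat; lra).
    assert (L * L <= p * q) by (apply Rmult_le_compat; lra).
    assert (r * E L <= 3 * (p * q + 1)) by nra.
    replace (r ^ 2 * E L) with (r * (r * E L)) by ring.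
    apply Rmult_le_compat_l; lra.
  -
    intros hlg.
    assert (hcontF4 : contOn (F4 r) Z 1) by (apply cont_F4; lra).
    assert (hsplit : Rint (F4 r) Z a + Rint (F4 r) a 1 = Rint (F4 r) Z 1) by (apply Rint_chasles; auto; lra).
    assert (hpos2 : 0 <= Rint (F4 r) a 1).
    { apply Rint_nonneg; try lra. apply cont_F4; lra. intros x hx. apply F4_bounds; lra. }
    assert (hint : Rint F1 Z a <= Rint (fun z => 33 * (r^2/4) * F4 r z) Z a).
    { apply Rint_le; auto. apply cont_F1; lra.
      intros x hx. apply continuity_pt_mult; [apply cont_const|apply (cont_F4 r Z a); lra].
      intros x hx. unfold F1, F4.
      pose proof (f_le x ltac:(lra)).
      assert (ha2 : (1 - a^2) * E L ^ 2 = 1) by (unfold a; field_simplify; try lra; nra).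
      assert (hx2 : x^2 <= a^2) by (apply pow_incr; lra).
      assert (h1a : 0 <= 1 - a^2) by (assert (a^2 <= 1^2) by (apply pow_incr; lra); rewrite pow1 in *; lra).
      assert (hx3a : 8 * r^2 * (1 - a^2) <= 8 * r^2 * (1 - x^2)).
      { apply Rmult_le_compat_l; [pose proof (pow2_ge_0 r); lra|lra]. }
      assert (hx3b : E L ^ 2 * (1 - a^2) <= 8 * r^2 * (1 - a^2)) by (apply Rmult_le_compat_r; lra).
      assert (hx3 : 1 <= 8 * r^2 * (1 - x^2)) by lra.
      replace (33 * (r ^ 2 / 4) * ((x ^ 2 - x ^ 4 / 3) / (1 + r ^ 2 * (1 - x ^ 2) / 4)))
        with ((33 * (r^2/4) * (x ^ 2 - x ^ 4 / 3)) / (1 + r ^ 2 * (1 - x ^ 2) / 4)) by (field; nra).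
      assert (hM : 1 + r ^ 2 * (1 - x ^ 2) / 4 <= 33 * (r^2/4) * (1 - x^2)) by lra.
      assert (ha3 : a^2 < 1) by (clear - ha1 hZ0 hZa; nra).
      assert (h1x : 0 < 1 - x^2) by lra.
      assert (0 < 1 + r ^ 2 * (1 - x ^ 2) / 4).
      { assert (0 <= r^2 * (1 - x^2)) by (apply Rmult_le_pos; [apply pow2_ge_0|lra]). lra. }
      apply div_le_div; try lra.
      replace (33 * (r ^ 2 / 4) * (x ^ 2 - x ^ 4 / 3) * (1 - x ^ 2)) with
        ((x ^ 2 - x ^ 4 / 3) * (33 * (r ^ 2 / 4) * (1 - x ^ 2))) by ring.
      apply Rmult_le_compat_l; lra. }
    rewrite Rint_scal in hint by (auto; apply (cont_F4 r Z a); lra).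
    assert (hc0 : 0 <= 33 * (r^2/4)) by (pose proof (pow2_ge_0 r); lra).
    assert (33 * (r^2/4) * Rint (F4 r) Z a <= 33 * (r^2/4) * Rint (F4 r) Z 1) by (apply Rmult_le_compat_l; lra).
    replace (33 * (r ^ 2 / 4 * Rint (F4 r) Z 1)) with (33 * (r^2/4) * Rint (F4 r) Z 1) by ring.
    lra.
Qed.

Lemma ln_le' x y : 0 < x -> x <= y -> ln x <= ln y.
Proof.
  intros h1 h2. destruct (Req_dec x y) as [e|n]; [subst; lra|].
  left; apply ln_increasing; lra.
Qed.

Lemma U_lower r : ln (1 + r^2/4) / 12 <= PI * U r.
Proof.
  assert (hpi := pi_pos).
  set (c := r^2/4).
  assert (hc : 0 <= c) by (unfold c; pose proof (pow2_ge_0 r); lra).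
  assert (hU : PI * U r = c * Rint (F4 r) 0 1) by (rewrite U_eq; unfold c; field; lra).
  rewrite hU.
  assert (hs : Rint (F4 r) 0 (1/2) + Rint (F4 r) (1/2) 1 = Rint (F4 r) 0 1)
    by (apply Rint_chasles; try lra; apply cont_F4; lra).
  assert (h0 : 0 <= Rint (F4 r) 0 (1/2)).
  { apply Rint_nonneg; try lra. apply cont_F4; lra. intros x hx; apply F4_bounds; lra. }
  assert (h1 : Rint (fun z => c / 6 / (1 + 2 * c * (1 - z))) (1/2) 1 <= Rint (fun z => c * F4 r z) (1/2) 1).
  { apply Rint_le; try lra.
    - intros x hx. reg. assert (0 <= c * (1 - x)) by (apply Rmult_le_pos; lra). lra.
    - intros x hx. apply continuity_pt_mult; [apply cont_const|apply (cont_F4 r (1/2) 1); lra].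
    - intros x hx. unfold F4.
      assert (hf : 1/6 <= x^2 - x^4/3).
      { assert (hu1 : (1/2)^2 <= x^2) by (apply pow_incr; lra).
        assert (hu2 : x^2 <= 1^2) by (apply pow_incr; lra).
        rewrite pow1 in hu2.
        replace (x^2 - x^4/3) with (x^2 - (x^2)^2/3) by field.
        set (u := x^2) in *. assert (0 <= (u - 1/4) * (1 - u)) by (apply Rmult_le_pos; lra).
        nra. }
      assert (hm1 : 0 <= c * (1 - x^2)) by (apply Rmult_le_pos; nra).
      assert (hm2 : c * (1 - x^2) <= 2 * c * (1 - x)) by nra.
      replace (1 + r ^ 2 * (1 - x ^ 2) / 4) with (1 + c * (1 - x^2)) by (unfold c; field).
      replace (c * ((x ^ 2 - x ^ 4 / 3) / (1 + c * (1 - x ^ 2))))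
        with ((c * (x ^ 2 - x ^ 4 / 3)) / (1 + c * (1 - x^2))) by (field; lra).
      apply div_le_div; try lra.
      apply Rmult_le_compat; try lra.
      replace (c/6) with (c * (1/6)) by field. apply Rmult_le_compat_l; lra. }
  rewrite int_Ulow in h1 by lra.
  rewrite Rint_scal in h1 by (try lra; apply cont_F4; lra).
  fold c. rewrite <- hs.
  assert (0 <= c * Rint (F4 r) 0 (1/2)) by (apply Rmult_le_pos; lra).
  lra.
Qed.

Lemma BL_upper L : 1 <= L -> PI * BL L <= 2/3 * ln (2 * (1 + L^2)).
Proof.
  intros hL. assert (hpi := pi_pos).
  pose proof (E_sq L). pose proof (E_pos L). pose proof (E_gt L).
  set (a := L / E L).
  assert (ha0 : 0 <= a) by (apply div_nonneg; lra).
  assert (ha1 : a < 1) by (apply div_lt_1; lra).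
  assert (hB : PI * BL L = Rint F1 0 a) by (rewrite BL_eq; fold a; field; lra).
  rewrite hB.
  assert (h1 : Rint F1 0 a <= Rint (fun z => 2/3 / (1 - z)) 0 a).
  { apply Rint_le; auto. apply cont_F1; lra.
    - intros x hx. reg. lra.
    - intros x hx. unfold F1. pose proof (f_le x ltac:(lra)).
      apply div_le_div; try lra. nra. nra. }
  rewrite int_inv1m in h1 by lra.
  assert (hinv : / (1 - a) = E L * (E L + L)).
  { unfold a. field_simplify_eq; try lra. nra.
    all: intro; nra. }
  assert (- ln (1 - a) = ln (E L * (E L + L))) by (rewrite <- hinv, ln_Rinv; lra).
  assert (ln (E L * (E L + L)) <= ln (2 * (1 + L^2))).
  { apply ln_le'. nra. nra. }
  lra.
Qed.

Lemma ln_le2 x y : 0 < x -> x <= y -> ln x <= ln y.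
Proof.
  intros h1 h2. destruct (Req_dec x y) as [e|n]; [subst; lra|].
  left; apply ln_increasing; lra.
Qed.

Lemma ln_le_inv x y : 0 < x -> 0 < y -> ln x <= ln y -> x <= y.
Proof.
  intros h1 h2 h3. destruct (Rle_or_lt x y) as [h|h]; auto.
  assert (ln y < ln x) by (apply ln_increasing; lra). lra.
Qed.

Lemma ln_sub1 x : 0 < x -> ln x <= x - 1.
Proof. intros h. pose proof (exp_ineq1_le (ln x)). rewrite exp_ln in H; lra. Qed.

Lemma ln_divR x y : 0 < x -> 0 < y -> ln (x / y) = ln x - ln y.
Proof. intros h1 h2. unfold Rdiv. rewrite ln_mult, ln_Rinv; try lra. apply Rinv_0_lt_compat; lra. Qed.

Lemma div_le_div' A B C D : 0 < B -> 0 < D -> A * D <= C * B -> A / B <= C / D.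
Proof.
  intros hB hD h.
  assert (e : A / B - C / D = (A * D - C * B) / (B * D)) by (field; lra).
  assert ((A * D - C * B) / (B * D) <= 0).
  { unfold Rdiv. assert (0 < / (B * D)) by (apply Rinv_0_lt_compat; nra). nra. }
  lra.
Qed.

Lemma div_nonneg' x y : 0 <= x -> 0 < y -> 0 <= x / y.
Proof. intros h1 h2. apply Rmult_le_pos; [lra|left; apply Rinv_0_lt_compat; lra]. Qed.

Lemma log_step (k X Y E2 r : R) (m : nat) :
  2 <= k -> 1 <= X -> 1 <= Y -> 1 <= E2 -> 0 < r ->
  400 * r / k^3 <= E2 -> 2 + ln (400 * r / k^3) / 2 <= k * X -> Y <= 2 + ln E2 / 2 ->
  k^3 * (k * X)^m < 400 * r ->
  400 * r * Y^m <= k^3 * E2 * (k * X)^m.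
Proof.
  intros hk hX hY hE2 hr hmu ht hYl hlt.
  set (t := k * X) in *.
  assert (ht0 : 2 <= t) by (unfold t; nra).
  assert (hk3 : 0 < k^3) by (apply pow_lt; lra).
  assert (htm : 0 < t^m) by (apply pow_lt; lra).
  assert (hYm : 0 < Y^m) by (apply pow_lt; lra).
  set (mu := ln (400 * r / k^3)) in *.
  set (la := ln E2) in *.
  assert (hmu_eq : mu = ln (400 * r) - ln (k^3)) by (unfold mu; apply ln_divR; lra).
  assert (hlnt : 0 < ln t) by (rewrite <- ln_1; apply ln_increasing; lra).
  assert (h1 : ln (k^3) + INR m * ln t < ln (400 * r)).
  { rewrite <- ln_pow by lra. rewrite <- ln_mult by lra. apply ln_increasing; try nra. }
  assert (hm : INR m * ln t < mu) by lra.
  assert (hmpos : 0 <= INR m) by apply pos_INR.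
  assert (hmu0 : 0 < mu) by nra.
  set (K := 2 + mu / 2) in *.
  assert (hK : 2 < K) by (unfold K; lra).
  assert (hlnK : ln K <= ln t) by (apply ln_le2; lra).
  assert (hlnK2 : mu / (2 * K) <= ln K).
  { pose proof (ln_sub1 (/ K) ltac:(apply Rinv_0_lt_compat; lra)) as h.
    rewrite ln_Rinv in h by lra.
    assert (e : mu / (2 * K) = 1 - 1 / K - 1 / K) by (unfold K; field; lra).
    assert (0 < 1 / K) by (apply Rdiv_lt_0_compat; lra).
    assert (/ K = 1 / K) by (field; lra). lra. }
  assert (hm2K : INR m <= 2 * K).
  { assert (INR m * (mu / (2 * K)) <= INR m * ln t).
    { apply Rmult_le_compat_l; lra. }
    assert (INR m * (mu / (2 * K)) < mu) by lra.
    replace (INR m * (mu / (2 * K))) with (mu * (INR m / (2 * K))) in H0 by (field; lra).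
    assert (INR m / (2 * K) < 1).
    { destruct (Rlt_or_le (INR m / (2 * K)) 1) as [h|h]; auto.
      assert (mu * 1 <= mu * (INR m / (2 * K))) by (apply Rmult_le_compat_l; lra). lra. }
    assert (INR m = (INR m / (2 * K)) * (2 * K)) by (field; lra). nra. }
  assert (hmula : mu <= la) by (apply ln_le2; [apply Rdiv_lt_0_compat; lra | lra]).
  set (K' := 2 + la / 2) in *.
  assert (hlnY : ln Y <= ln K') by (apply ln_le2; lra).
  assert (hKK : ln K' - ln K <= (la - mu) / (2 * K)).
  { pose proof (ln_sub1 (K' / K) ltac:(apply Rdiv_lt_0_compat; lra)) as h.
    rewrite ln_divR in h by lra.
    assert (e : K' / K - 1 = (la - mu) / (2 * K)) by (unfold K', K; field; lra). lra. }
  assert (h2 : INR m * (ln Y - ln t) <= la - mu).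
  { apply Rle_trans with (INR m * ((la - mu) / (2 * K))).
    - apply Rmult_le_compat_l; lra.
    - assert (0 <= (la - mu) / (2 * K)) by (apply div_nonneg'; lra).
      replace (INR m * ((la - mu) / (2 * K))) with ((INR m / (2 * K)) * (la - mu)) by (field; lra).
      assert (INR m / (2 * K) <= 1).
      { apply (Rmult_le_reg_r (2 * K)); [lra|]. replace (INR m / (2 * K) * (2 * K)) with (INR m) by (field; lra). lra. }
      assert (0 <= INR m / (2 * K)) by (apply div_nonneg'; lra).
      nra. }
  assert (h400 : 0 < 400 * r) by lra.
  apply ln_le_inv; try (apply Rmult_lt_0_compat; try apply Rmult_lt_0_compat; lra).
  rewrite (ln_mult (400 * r) (Y^m)) by lra. rewrite ln_pow by lra.
  rewrite (ln_mult (k^3 * E2) (t^m)) by (try apply Rmult_lt_0_compat; lra).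
  rewrite (ln_mult (k^3) E2) by lra. rewrite (ln_pow t) by lra.
  unfold la in *. lra.
Qed.

Lemma core (D X Y E2 r k : R) (m : nat) :
  34 <= k^3 -> 2 <= k -> 1 <= X -> 1 <= Y -> 1 <= E2 ->
  Rabs D <= 34 * X ->
  (Y <= k * X \/
   (0 < r /\ 400 * r / k^3 <= E2 /\ Rabs D <= 400 * r * X / E2 /\
    2 + ln (400 * r / k^3) / 2 <= k * X /\ Y <= 2 + ln E2 / 2)) ->
  Rabs D / X ^ (S m) <= k ^ (m + 3) * Rmax (/ Y ^ m) (/ E2).
Proof.
  intros hk3 hk hX hY hE2 hD1 hcase.
  pose proof (Rabs_pos D) as hD0. set (A := Rabs D) in *.
  assert (hXm : 0 < X ^ m) by (apply pow_lt; lra).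
  assert (hYm : 0 < Y ^ m) by (apply pow_lt; lra).
  assert (hkm : 0 < k ^ m) by (apply pow_lt; lra).
  assert (hk3p : 0 < k ^ 3) by (apply pow_lt; lra).
  assert (hpow : k ^ (m + 3) = k ^ m * k ^ 3) by (apply pow_add).
  assert (hS : X ^ (S m) = X * X ^ m) by reflexivity.
  assert (htm : (k * X) ^ m = k ^ m * X ^ m) by (apply Rpow_mult_distr).
  rewrite hS, hpow.
  assert (hXX : 0 < X * X ^ m) by nra.
  assert (hkk : 0 < k ^ m * k ^ 3) by nra.
  assert (hmaxY : k ^ m * k ^ 3 / Y ^ m <= k ^ m * k ^ 3 * Rmax (/ Y ^ m) (/ E2)).
  { unfold Rdiv. apply Rmult_le_compat_l; [lra|apply Rmax_l]. }
  assert (hmaxE : k ^ m * k ^ 3 / E2 <= k ^ m * k ^ 3 * Rmax (/ Y ^ m) (/ E2)).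
  { unfold Rdiv. apply Rmult_le_compat_l; [lra|apply Rmax_r]. }
  destruct (Rle_or_lt Y (k * X)) as [hYk | hYk].
  - assert (hYm' : Y ^ m <= k ^ m * X ^ m) by (rewrite <- htm; apply pow_incr; lra).
    eapply Rle_trans; [|exact hmaxY].
    apply div_le_div'; try lra.
    apply Rle_trans with (34 * X * (k ^ m * X ^ m)).
    + apply Rmult_le_compat; lra.
    + assert (0 <= X * (k^m * X^m)) by nra.
      replace (34 * X * (k ^ m * X ^ m)) with (34 * (X * (k^m * X^m))) by ring.
      replace (k ^ m * k ^ 3 * (X * X ^ m)) with (k^3 * (X * (k^m * X^m))) by ring.
      apply Rmult_le_compat_r; lra.
  - destruct hcase as [hc|(hr & hmu & hD2 & ht & hYl)]; [lra|].
    assert (hD3 : A * E2 <= 400 * r * X).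
    { apply (Rmult_le_reg_r (/ E2)); [apply Rinv_0_lt_compat; lra|].
      replace (A * E2 * / E2) with A by (field; lra). exact hD2. }
    destruct (Rle_or_lt (400 * r) (k^3 * (k * X)^m)) as [ha|hb].
    + eapply Rle_trans; [|exact hmaxE].
      apply div_le_div'; try lra.
      apply Rle_trans with (400 * r * X); [lra|].
      rewrite htm in ha.
      replace (k ^ m * k ^ 3 * (X * X ^ m)) with (X * (k ^ 3 * (k ^ m * X ^ m))) by ring.
      replace (400 * r * X) with (X * (400 * r)) by ring.
      apply Rmult_le_compat_l; lra.
    + pose proof (log_step k X Y E2 r m hk hX hY hE2 hr hmu ht hYl hb) as hl.
      eapply Rle_trans; [|exact hmaxY].
      apply div_le_div'; try lra.
      rewrite htm in hl.
      assert (A * Y^m * E2 <= 400 * r * X * Y^m).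
      { replace (A * Y^m * E2) with (Y^m * (A * E2)) by ring.
        replace (400 * r * X * Y^m) with (Y^m * (400 * r * X)) by ring.
        apply Rmult_le_compat_l; lra. }
      assert (400 * r * X * Y^m <= X * (k ^ 3 * E2 * (k ^ m * X ^ m))).
      { replace (400 * r * X * Y^m) with (X * (400 * r * Y^m)) by ring.
        apply Rmult_le_compat_l; lra. }
      apply (Rmult_le_reg_r E2); [lra|].
      replace (k ^ m * k ^ 3 * (X * X ^ m) * E2) with (X * (k ^ 3 * E2 * (k ^ m * X ^ m))) by ring.
      lra.
Qed.

Lemma PI_gt : 8/3 <= PI.
Proof.
  destruct (PI_ineq 0) as [h _]. simpl in h. unfold tg_alt, PI_tg in h. simpl in h. lra.
Qed.

Lemma U_nonneg r : 0 <= U r.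
Proof.
  rewrite U_eq. apply Rmult_le_pos.
  - apply div_nonneg. apply pow2_ge_0. pose proof pi_pos; lra.
  - apply Rint_nonneg; try lra. apply cont_F4; lra. intros x hx; apply F4_bounds; lra.
Qed.

Lemma BL_nonneg L : 0 <= L -> 0 <= BL L.
Proof.
  intros hL. rewrite BL_eq. pose proof pi_pos.
  pose proof (E_sq L). pose proof (E_pos L). pose proof (E_gt L).
  apply Rmult_le_pos. left; apply Rinv_0_lt_compat; lra.
  apply Rint_nonneg. apply div_nonneg; lra. apply cont_F1; try lra. apply div_lt_1; lra.
  intros x hx. unfold F1. assert (x <= 1) by (assert (L / E L < 1) by (apply div_lt_1; lra); lra).
  assert (x < 1) by (assert (L / E L < 1) by (apply div_lt_1; lra); lra).
  pose proof (f_le x ltac:(lra)). apply div_nonneg; [lra|nra].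
Qed.

Lemma UL_r0 L : 0 <= L -> UL L 0 = 0.
Proof.
  intros hL. pose proof pi_pos.
  pose proof (E_sq L). pose proof (E_pos L). pose proof (E_gt L).
  assert (ha0 : 0 <= L / E L) by (apply div_nonneg; lra).
  assert (ha1 : L / E L < 1) by (apply div_lt_1; lra).
  destruct (decomp L 0) as [h1 _]; try rewrite ZL_0; try lra.
  + intros z hz. lra.
  + rewrite ZL_0, Rint_pt in h1.
    assert (PI * UL L 0 = 0) by (rewrite h1; field).
    apply (Rmult_eq_reg_l PI); lra.
Qed.

Lemma U_r0 : U 0 = 0.
Proof. rewrite U_eq. field. pose proof pi_pos; lra. Qed.

Lemma UL_big L r : 2 * L < r -> UL L r = 0.
Proof. intros h. unfold UL. destruct (Rle_dec r (2 * L)); [lra|reflexivity]. Qed.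

Lemma D_bounds L r : 1 <= L -> 0 < r -> r <= 2 * L ->
  Rabs (UL L r - U r) <= 34 * (1 + U r) /\
  Rabs (UL L r - U r) <= 400 * r * (1 + U r) / E (2 * L) /\
  (8 * r^2 < E L ^ 2 -> Rabs (UL L r - U r) <= r / E L) /\
  UL L r <= kappa1 * (1 + U r).
Proof.
  intros hL hr hr2.
  destruct (main_bounds L r hL hr hr2) as (R1 & R3 & R4a & R4b & hUL & hU & h1 & h3 & h4a & h4b & hR3 & hsm & hlg).
  pose proof pi_pos as hpi. pose proof PI_gt as hpi3. pose proof PI_4 as hpi4.
  pose proof (E_sq L) as hEsq. pose proof (E_pos L) as hEp. pose proof (E_gt L) as hEgt.
  pose proof (U_nonneg r) as hU0.
  set (c := r^2/4) in *.
  assert (hc : 0 <= c) by (unfold c; pose proof (pow2_ge_0 r); lra).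
  assert (hcR4a : 0 <= c * R4a) by (apply Rmult_le_pos; lra).
  assert (hcR4b : 0 <= c * R4b) by (apply Rmult_le_pos; lra).
  assert (hr3 : 0 <= r / 2 * R3) by (apply Rmult_le_pos; lra).
  assert (hPD : PI * (UL L r - U r) = R1 - c * R4b - r/2 * R3) by (rewrite Rmult_minus_distr_l, hUL, hU; ring).
  assert (hPDabs : PI * Rabs (UL L r - U r) <= R1 + c * R4b + r/2 * R3).
  { rewrite <- (Rabs_pos_eq PI) by lra. rewrite <- Rabs_mult, hPD.
    unfold Rabs. destruct (Rcase_abs _); lra. }
  assert (hrE : r / E L <= 2).
  { apply (Rmult_le_reg_r (E L)); [lra|]. replace (r / E L * E L) with r by (field; lra). lra. }
  assert (hR3' : r / 2 * R3 <= 2/3 * (r / E L)) by (replace (2/3 * (r / E L)) with (2 * r / (3 * E L)) by (field; lra); lra).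
  assert (hE2 : E (2 * L) <= 2 * E L).
  { pose proof (E_sq (2*L)). pose proof (E_pos (2*L)). nra. }
  assert (hE2p : 0 < E (2 * L)) by apply E_pos.
  assert (small : 8 * r^2 < E L ^ 2 -> Rabs (UL L r - U r) <= r / E L).
  { intros hs. destruct (hsm hs) as [a1 a2].
    assert (PI * Rabs (UL L r - U r) <= 8/3 * (r / E L)) by lra.
    assert (0 <= r / E L) by (apply div_nonneg; lra).
    assert (8/3 * Rabs (UL L r - U r) <= PI * Rabs (UL L r - U r))
      by (apply Rmult_le_compat_r; [apply Rabs_pos|lra]).
    lra. }
  assert (large : E L ^ 2 <= 8 * r^2 -> Rabs (UL L r - U r) <= 34 * U r + 1/2).
  { intros hl. pose proof (hlg hl).
    assert (PI * Rabs (UL L r - U r) <= 34 * (PI * U r) + 4/3) by lra.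
    assert (PI * Rabs (UL L r - U r) <= PI * (34 * U r + 1/2)) by nra.
    apply (Rmult_le_reg_l PI); lra. }
  split; [|split; [|split]].
  - destruct (Rlt_or_le (8 * r^2) (E L ^ 2)) as [hs|hl].
    + pose proof (small hs). assert (r / E L < 1).
      { apply div_lt_1; [lra|]. nra. }
      lra.
    + pose proof (large hl). lra.
  - destruct (Rlt_or_le (8 * r^2) (E L ^ 2)) as [hs|hl].
    + pose proof (small hs).
      assert (r / E L <= 2 * r / E (2 * L)).
      { apply div_le_div; try lra. replace (2 * r * E L) with (r * (2 * E L)) by ring.
        apply Rmult_le_compat_l; lra. }
      assert (2 * r / E (2 * L) <= 400 * r * (1 + U r) / E (2 * L)).
      { apply div_le_div; try lra. apply Rmult_le_compat_r; [lra|].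
        assert (0 <= r * U r) by (apply Rmult_le_pos; lra).
        replace (400 * r * (1 + U r)) with (400*r + 400*(r*U r)) by ring. lra. }
      lra.
    + pose proof (large hl).
      assert (h68 : 68 * E L <= 400 * r).
      { assert (hsq : (68 * E L)^2 <= (400 * r)^2).
        { replace ((68 * E L)^2) with (4624 * E L ^ 2) by ring.
          replace ((400 * r)^2) with (160000 * r ^ 2) by ring. pose proof (pow2_ge_0 r). lra. }
        destruct (Rle_or_lt (68 * E L) (400 * r)) as [hh|hh]; auto.
        assert (0 < (68 * E L - 400 * r) * (68 * E L + 400 * r)) by (apply Rmult_lt_0_compat; lra).
        assert (e : (68 * E L)^2 - (400*r)^2 = (68 * E L - 400 * r) * (68 * E L + 400 * r)) by ring.
        lra. }
      assert (34 * (1 + U r) <= 400 * r * (1 + U r) / E (2 * L)).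
      { replace (34 * (1 + U r)) with (34 * (1 + U r) / 1) by field.
        apply div_le_div; try lra.
        replace (34 * (1 + U r) * E (2 * L)) with ((1 + U r) * (34 * E (2 * L))) by ring.
        replace (400 * r * (1 + U r) * 1) with ((1 + U r) * (400 * r)) by ring.
        apply Rmult_le_compat_l; lra. }
      lra.
  - exact small.
  - unfold kappa1.
    assert (hR1 : R1 <= 1 + 33 * (c * R4b)).
    { destruct (Rlt_or_le (8 * r^2) (E L ^ 2)) as [hs|hl].
      + destruct (hsm hs) as [a1 a2]. assert (r / E L < 1) by (apply div_lt_1; nra). lra.
      + pose proof (hlg hl). lra. }
    assert (hU2 : PI * U r = c * R4a + c * R4b) by (rewrite hU; ring).
    assert (PI * UL L r <= 1 + 33 * (PI * U r)) by lra.
    assert (PI * U r <= 4 * U r) by (apply Rmult_le_compat_r; lra).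
    assert (PI * UL L r <= 258 * (1 + U r)) by lra.
    apply (Rmult_le_reg_l PI); try lra.
    replace (PI * (258 / PI * (1 + U r))) with (258 * (1 + U r)) by (field; lra). lra.
Qed.

Lemma ln2_le1 : ln 2 <= 1.
Proof. pose proof (ln_sub1 2 ltac:(lra)). lra. Qed.

Lemma kappa0_ge : 20 <= kappa0.
Proof. unfold kappa0. pose proof PI_gt. lra. Qed.

Lemma kX_lower r : kappa0 + 5/8 * ln (1 + r^2/4) <= kappa0 * (1 + U r).
Proof.
  pose proof (U_lower r). pose proof pi_pos. unfold kappa0.
  assert (15 * PI / 2 * U r = 15/2 * (PI * U r)) by field.
  assert (5/8 * ln (1 + r^2/4) = 15/2 * (ln (1 + r^2/4) / 12)) by field.
  nra.
Qed.

Lemma Y_upper L : 1 <= L -> 1 + BL L <= 1 + 1/4 * ln (2 * (1 + L^2)).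
Proof.
  intros hL. pose proof (BL_upper L hL). pose proof pi_pos. pose proof PI_gt.
  assert (0 <= ln (2 * (1 + L^2))).
  { rewrite <- ln_1. apply ln_le'; try lra. pose proof (pow2_ge_0 L); lra. }
  assert (BL L <= 2/3 * ln (2 * (1 + L^2)) / PI).
  { apply (Rmult_le_reg_l PI); [lra|]. replace (PI * (2/3 * ln (2 * (1 + L^2)) / PI)) with (2/3 * ln (2 * (1 + L^2))) by (field; lra). lra. }
  assert (2/3 * ln (2 * (1 + L^2)) / PI <= 1/4 * ln (2 * (1 + L^2))).
  { apply (Rmult_le_reg_l PI); [lra|].
    replace (PI * (2/3 * ln (2 * (1 + L^2)) / PI)) with (2/3 * ln (2 * (1 + L^2))) by (field; lra).
    assert (8/3 * ln (2 * (1 + L^2)) <= PI * ln (2 * (1 + L^2))) by (apply Rmult_le_compat_r; lra).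
    lra. }
  lra.
Qed.

Theorem proposition1 :
  (forall r : R, 0 <= r ->
     forall eps : R, 0 < eps ->
       exists M : R, forall L : R, M <= L -> Rabs (UL L r - U r) < eps)
  /\
  (forall (L : R) (m : nat), 1 <= L ->
     forall r : R, 0 <= r ->
       Rabs ((UL L r - U r) / (1 + U r) ^ (S m))
       <= kappa0 ^ (m + 3) * Rmax (/ (1 + BL L) ^ m) (/ E (2 * L)))
  /\
  (forall L r : R, 1 <= L -> 0 <= r -> r <= 2 * L ->
     0 <= UL L r /\ UL L r <= kappa1 * (1 + U r)).
Proof.
  split; [|split].
  -
    intros r hr eps heps.
    destruct (Req_dec r 0) as [h0|hr0].
    + subst r. exists 1. intros L hL. rewrite UL_r0, U_r0 by lra.
      replace (0 - 0) with 0 by ring. rewrite Rabs_R0. lra.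
    + exists (3 * r + 1 + r / eps). intros L hL.
      assert (hre : 0 <= r / eps) by (apply div_nonneg; lra).
      assert (hL1 : 1 <= L) by lra.
      assert (hr2 : r <= 2 * L) by lra.
      pose proof (E_gt L). pose proof (E_pos L).
      assert (hsm : 8 * r^2 < E L ^ 2) by nra.
      destruct (D_bounds L r hL1 ltac:(lra) hr2) as (_ & _ & h3 & _).
      pose proof (h3 hsm).
      assert (r / E L < eps).
      { apply (Rmult_lt_reg_r (E L)); [lra|]. replace (r / E L * E L) with r by (field; lra).
        assert (r / eps * eps = r) by (field; lra).
        assert (r / eps < E L) by lra. nra. }
      lra.
  -
    intros L m hL r hr.
    pose proof (U_nonneg r) as hU0. pose proof (BL_nonneg L ltac:(lra)) as hB0.
    pose proof (E_ge1 (2 * L)) as hE2.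
    pose proof kappa0_ge as hk.
    assert (hX : 0 < (1 + U r) ^ S m) by (apply pow_lt; lra).
    unfold Rdiv. rewrite Rabs_mult, Rabs_inv, (Rabs_pos_eq ((1 + U r) ^ S m)) by lra.
    fold (Rabs (UL L r - U r) / (1 + U r) ^ S m).
    destruct (Req_dec r 0) as [h0|hr0].
    + subst r. rewrite UL_r0, U_r0 by lra. replace (0 - 0) with 0 by ring. rewrite Rabs_R0.
      rewrite U_r0 in hX. replace (0 / (1 + 0) ^ S m) with 0 by (field; lra).
      apply Rmult_le_pos. apply pow_le; lra.
      apply Rle_trans with (/ E (2 * L)). left; apply Rinv_0_lt_compat; lra. apply Rmax_r.
    + assert (hk3 : 34 <= kappa0 ^ 3) by (simpl; nra).
      apply (core (UL L r - U r) (1 + U r) (1 + BL L) (E (2 * L)) r kappa0 m hk3 ltac:(lra) ltac:(lra) ltac:(lra) hE2).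
      * destruct (Rle_or_lt r (2 * L)) as [hle|hgt].
        -- apply (D_bounds L r hL ltac:(lra) hle).
        -- rewrite UL_big by lra. replace (0 - U r) with (- U r) by ring. rewrite Rabs_Ropp, Rabs_pos_eq by lra. lra.
      * pose proof (kX_lower r) as hkX. pose proof (Y_upper L hL) as hY.
        assert (hl0 : 0 <= ln (1 + r^2/4)).
        { rewrite <- ln_1. apply ln_le'; try lra. pose proof (pow2_ge_0 r); lra. }
        assert (hln2 := ln2_le1).
        assert (hL2 : 0 < 1 + L^2) by (pose proof (pow2_ge_0 L); lra).
        destruct (Rle_or_lt r (2 * L)) as [hle|hgt].
        -- right.
           assert (hk3' : 8000 <= kappa0 ^ 3) by (simpl; nra).
           assert (hk3p : 0 < kappa0 ^ 3) by lra.
           pose proof (E_gt (2 * L)) as hE2g.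
           assert (hw : 400 * r / kappa0 ^ 3 <= r / 20).
           { apply div_le_div'; try lra. replace (400 * r * 20) with (r * 8000) by ring. apply Rmult_le_compat_l; lra. }
           assert (hw0 : 0 < 400 * r / kappa0 ^ 3) by (apply div_pos; lra).
           split; [lra|]. split; [lra|]. split.
           { apply (D_bounds L r hL ltac:(lra) hle). }
           split.
           ++ assert (hw2 : (400 * r / kappa0 ^ 3) ^ 2 <= 1 + r^2/4).
              { assert ((400 * r / kappa0 ^ 3) ^ 2 <= (r / 20) ^ 2) by (apply pow_incr; lra).
                assert ((r/20)^2 <= 1 + r^2/4).
                { replace ((r/20)^2) with (r^2/400) by field. pose proof (pow2_ge_0 r). lra. }
                lra. }
              assert (hlw : ln ((400 * r / kappa0 ^ 3) ^ 2) <= ln (1 + r^2/4)) by (apply ln_le'; [apply pow_lt; lra| lra]).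
              rewrite ln_pow in hlw by lra. simpl INR in hlw.
              lra.
           ++ assert (hE2sq : E (2 * L) ^ 2 = 1 + (2 * L)^2) by apply E_sq.
              assert (h2 : 2 * (1 + L^2) <= 2 * E (2 * L) ^ 2) by (rewrite hE2sq; nra).
              assert (hl2 : ln (2 * (1 + L^2)) <= ln (2 * E (2 * L) ^ 2)) by (apply ln_le'; lra).
              rewrite (ln_mult 2 (E (2*L) ^ 2)) in hl2 by (try lra; apply pow_lt; pose proof (E_pos (2*L)); lra). rewrite (ln_pow (E (2*L))) in hl2 by (pose proof (E_pos (2*L)); lra).
              simpl INR in hl2.
              assert (0 <= ln (E (2 * L))) by (rewrite <- ln_1; apply ln_le'; lra).
              lra.
        -- left.
           assert (h1 : 1 + L^2 <= 1 + r^2/4) by nra.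
           assert (hl1 : ln (2 * (1 + L^2)) <= ln 2 + ln (1 + r^2/4)).
           { rewrite ln_mult by lra. pose proof (ln_le' _ _ hL2 h1). lra. }
           lra.
  - intros L r hL hr hr2. split.
    + apply UL_nonneg; auto.
    + destruct (Req_dec r 0) as [h0|hr0].
      * subst r. rewrite UL_r0 by lra. pose proof (U_nonneg 0). unfold kappa1.
        pose proof pi_pos. apply Rmult_le_pos; [apply div_nonneg; lra|lra].
      * apply (D_bounds L r hL ltac:(lra) hr2).
Qed.
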